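(* For every $J\subseteq[n-1]$, $$\varphi(X^0_J)=2^{1+\#J}\sum_{F\in\mathring{\mathcal{F}}_n,\ F\subseteq J\cup(J+1)}\mathring{P}_F\quad\text{and}\quad\varphi(Y^0_J)=\sum_{F\in\mathring{\mathcal{F}}_n,\ F\subseteq J\triangle(J+1)}2^{1+\#F}\mathring{P}_F.$$
   Context: $B_n$: signed permutations $w=w_1\dots w_n$, values ordered $\cdots<-2<-1<1<2<\cdots$, $w_0=0$; $\mathrm{Des}(w)=\{i\in\{0,\dots,n-1\}:w_i>w_{i+1}\}$; $Y_J=\sum_{\mathrm{Des}(w)=J}w$, $X_J=\sum_{\mathrm{Des}(w)\subseteq J}w$. For $J\subseteq[n-1]$, $X^0_J=X_{\{0\}\cup J}$ and $Y^0_J=Y_{\{0\}\cup J}+Y_J$. $\varphi$: linear extension of $w\mapsto|w_1|\dots|w_n|$. For $u\in\mathfrak{S}_n$, $\mathring{\mathrm{Peak}}(u)=\{i\in\{2,\dots,n-1\}:u_{i-1}<u_i>u_{i+1}\}$; $\mathring{\mathcal{F}}_n$ is the set of subsets of $\{2,\dots,n-1\}$ with no two consecutive integers; $\mathring{P}_F=\sum_{\mathring{\mathrm{Peak}}(u)=F}u$. $J+1=\{j+1:j\in J\}$, $\triangle$ = symmetric difference. *)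

(* Defs.v *)
From mathcomp Require Import all_boot all_order all_algebra all_fingroup.
Set Implicit Arguments. Unset Strict Implicit. Unset Printing Implicit Defensive.
Import Order.TTheory GRing.Theory Num.Theory.
Local Open Scope ring_scope.

(* Signed permutations of B_n: w_i = (-1)^{s i} * (sigma i + 1), i.e. a pair
   (sigma, s) with sigma a permutation of 'I_n and s the sign pattern.
   Position k (1-indexed, 1 <= k <= n) is ordinal k-1. *)
Definition sperm (n : nat) := ({perm 'I_n} * {ffun 'I_n -> bool})%type.

Definition wval n (w : sperm n) (i : 'I_n) : int :=
  (if w.2 i then -1 else 1) * ((w.1 i).+1)%:Z.

Definition wseq n (w : sperm n) : seq int := 0 :: [seq wval w i | i <- enum 'I_n].

(* Des(w) = {i in {0..n-1} : w_i > w_{i+1}}, i represented by the ordinal i *)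
Definition Des n (w : sperm n) : {set 'I_n} :=
  [set i : 'I_n | nth 0 (wseq w) i.+1 < nth 0 (wseq w) i].

(* group algebra elements: coefficient functions *)
Definition Yset n (J : {set 'I_n}) : {ffun sperm n -> int} :=
  [ffun w => ((Des w == J) : nat)%:Z].
Definition Xset n (J : {set 'I_n}) : {ffun sperm n -> int} :=
  [ffun w => ((Des w \subset J) : nat)%:Z].

Definition setZ n (J : {set 'I_n}) : {set 'I_n} :=
  [set i : 'I_n | (val i == 0%N) || (i \in J)].

Definition X0 n (J : {set 'I_n}) := Xset (setZ J).
Definition Y0 n (J : {set 'I_n}) := Yset (setZ J) + Yset J.

(* phi : linear extension of w |-> |w_1| ... |w_n| *)
Definition phi n (X : {ffun sperm n -> int}) : {ffun 'S_n -> int} :=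
  [ffun u : 'S_n => \sum_(w : sperm n | [forall i, `|wval w i| == ((u i).+1)%:Z]) X w].

Definition useq n (u : 'S_n) : seq nat := 0%N :: [seq (u i).+1 | i <- enum 'I_n].

Definition Peak n (u : 'S_n) : {set 'I_n} :=
  [set i : 'I_n | [&& (2 <= i)%N, (i <= n.-1)%N,
     (nth 0%N (useq u) i.-1 < nth 0%N (useq u) i)%N &
     (nth 0%N (useq u) i.+1 < nth 0%N (useq u) i)%N]].

Definition inF n (F : {set 'I_n}) : bool :=
  [forall i in F, (2 <= i)%N && (i <= n.-1)%N] &&
  [forall i in F, forall j in F, val j != (val i).+1].

Definition Pring n (F : {set 'I_n}) : {ffun 'S_n -> int} :=
  [ffun u => ((Peak u == F) : nat)%:Z].

Definition shift1 n (J : {set 'I_n}) : {set 'I_n} :=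
  [set i : 'I_n | [exists j in J, val i == (val j).+1]].

Definition symdiff n (A B : {set 'I_n}) : {set 'I_n} := (A :\: B) :|: (B :\: A).

(* Main.v *)
Require Import Defs.
From mathcomp Require Import all_boot all_order all_algebra all_fingroup.
Set Implicit Arguments. Unset Strict Implicit. Unset Printing Implicit Defensive.
Import Order.TTheory GRing.Theory Num.Theory.

Lemma sgn_lt (a b : nat) (sa sb : bool) : a != b ->
  (((if sb then -1 else 1) * (b.+1)%:Z < (if sa then -1 else 1) * (a.+1)%:Z)%R)
   = (if a < b then sb else ~~ sa).
Proof.
move=> ab; case: sa; case: sb => /=; rewrite ?mulN1r ?mul1r ?ltrN2 ?ltz_nat ?ltnS.
- by case: (a < b).
- by case: ifP => _; apply/negbTE; rewrite -leNgt; apply: (@le_trans _ _ 0%R); rewrite ?oppr_le0 //.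
- by case: ifP => _; apply: (@lt_le_trans _ _ 0%R); rewrite ?oppr_lt0.
- by case: ltngtP ab.
Qed.

Definition fu m (u : 'S_m.+1) (k : nat) : nat := u (inord k).
Definition asc m (u : 'S_m.+1) (k : nat) : bool := fu u k.-1 < fu u k.

Lemma fu_neq m (u : 'S_m.+1) k : 0 < k -> k < m.+1 -> fu u k.-1 != fu u k.
Proof.
move=> k0 km; apply/negP => /eqP /val_inj /perm_inj /(congr1 val).
rewrite /= !inordK //; last by apply: leq_ltn_trans km; apply: leq_pred.
by case: k k0 {km} => // k _ /eqP; rewrite /= eq_sym (gtn_eqF (ltnSn k)).
Qed.

Lemma wseq_nth m (w : sperm m.+1) k : k < m.+1 ->
  nth 0%R (wseq w) k.+1 = wval w (inord k).
Proof.
move=> km; rewrite /wseq /= (nth_map ord0) ?size_enum_ord //.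
by congr wval; apply: val_inj; rewrite /= nth_enum_ord // inordK.
Qed.

Lemma useq_nth m (u : 'S_m.+1) k : k < m.+1 ->
  nth 0 (useq u) k.+1 = (fu u k).+1.
Proof.
move=> km; rewrite /useq /= (nth_map ord0) ?size_enum_ord //.
by rewrite /fu; congr (nat_of_ord (u _)).+1; apply: val_inj; rewrite /= nth_enum_ord // inordK.
Qed.

Lemma Des_mem m (u : 'S_m.+1) (s : {ffun 'I_m.+1 -> bool}) (i : 'I_m.+1) :
  (i \in Des ((u, s) : sperm m.+1)) =
  if val i == 0 then s i else (if asc u i then s i else ~~ s (inord i.-1)).
Proof.
case: i => [[|j] hj]; rewrite inE wseq_nth //.
  rewrite /wval /=.
  have -> : inord 0 = Ordinal hj :> 'I_m.+1 by apply: val_inj; rewrite /= inordK.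
  by case: (s _).
rewrite (wseq_nth _ (ltn_trans (ltnSn j) hj)).
rewrite /wval /= sgn_lt; last by have := fu_neq u (ltn0Sn j) hj.
have e : inord j.+1 = Ordinal hj :> 'I_m.+1 by apply: val_inj; rewrite /= inordK.
by rewrite /asc /fu /= e.
Qed.

Lemma abs_wval m (w : sperm m.+1) i : `|wval w i|%R = Posz (w.1 i).+1.
Proof. by rewrite /wval; case: (w.2 i); rewrite ?mulN1r ?mul1r ?normrN. Qed.

Lemma phi_sum m (X : {ffun sperm m.+1 -> int}) (u : 'S_m.+1) :
  phi X u = (\sum_(s : {ffun 'I_m.+1 -> bool}) X (u, s))%R.
Proof.
rewrite /phi ffunE.
rewrite (eq_bigl (fun w : sperm m.+1 => (w.1 == u) && true)); last first.
  move=> [p s] /=; rewrite andbT; apply/forallP/eqP => [H | -> i].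
    apply/permP => i; apply/val_inj; move: (eqP (H i)); rewrite abs_wval /=.
    by case.
  by rewrite abs_wval.
transitivity (\sum_(p : {perm 'I_m.+1} * {ffun 'I_m.+1 -> bool} | (p.1 == u) && true) X (p.1, p.2))%R.
  by apply: eq_bigr => -[].
rewrite -(pair_big_dep (fun p => p == u) (fun _ _ => true) (fun p s => X (p,s))) /=.
by rewrite big_pred1_eq.
Qed.

Definition vv (L R c d : bool) : nat :=
  \sum_(b : bool) ((L ==> (b == c)) && (R ==> (b == d)) : nat).
Lemma vv_step L R c d : (L && R -> c = d) -> vv L R c d * 2 ^ (L || R) = 2.
Proof.
rewrite /vv big_bool /=.
by case: L; case: R; case: c; case: d => //= /(_ isT).
Qed.
Lemma prod_gen m (L R c d : nat -> bool) :
  (forall k, k < m -> L k && R k -> c k = d k) ->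
  (\prod_(0 <= k < m) vv (L k) (R k) (c k) (d k)) * 2 ^ (\sum_(0 <= k < m) (L k || R k : nat)) = 2 ^ m.
Proof.
elim: m => [|m IH] H; first by rewrite !big_geq.
rewrite !big_nat_recr //= expnD mulnACA IH; last first.
  move=> k km; apply: H. by apply: ltn_trans km _.
rewrite vv_step; [by rewrite expnS mulnC | exact: H].
Qed.

Lemma prod_incons m (L R c d : nat -> bool) k :
  k < m -> L k -> R k -> c k != d k ->
  \prod_(0 <= k < m) vv (L k) (R k) (c k) (d k) = 0.
Proof.
move=> km Lk Rk cd; elim: m km => [|m IH] km //.
rewrite big_nat_recr //=.
case: (ltnP k m) => h; first by rewrite IH.
have km' : k = m by apply/eqP; rewrite eqn_leq h -ltnS km.
subst k.
rewrite /vv big_bool /= Lk Rk /=.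
by move: cd; case: (c m); case: (d m) => //= _; rewrite muln0.
Qed.

Lemma shift_sum N (g : nat -> bool) :
  \sum_(0 <= k < N) ((k.+1 < N) && g k.+1 : nat) = \sum_(0 <= j < N) ((0 < j) && g j : nat).
Proof.
case: N => [|N]; first by rewrite !big_geq.
rewrite big_nat_recr //= big_nat_recl //= ltnn /= addn0 add0n.
apply: eq_big_nat => i /andP[_ hi]. by rewrite ltnS hi.
Qed.

Lemma prod_bool (I : finType) (P : pred I) : \prod_(i : I) (P i : nat) = [forall i, P i].
Proof.
case: (boolP [forall i, P i]) => [/forallP H | /forallPn [k Hk]].
  by rewrite big1 // => i _; rewrite H.
by rewrite (bigD1 k) //= (negbTE Hk).
Qed.

Lemma signs_count m (oa ob ba bb : nat -> bool) :
 \sum_(s : {ffun 'I_m.+1 -> bool}) ([forall j : 'I_m.+1, (0 < j) ==>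
     ((oa j ==> (s j == ba j)) && (ob j ==> (s (inord j.-1) == bb j)))] : nat)
 = \prod_(0 <= k < m.+1) vv ((0 < k) && oa k) ((k.+1 < m.+1) && ob k.+1) (ba k) (bb k.+1).
Proof.
rewrite big_mkord.
rewrite (eq_bigr (fun s : {ffun 'I_m.+1 -> bool} => \prod_(k : 'I_m.+1)
   ((((0 < k) && oa k) ==> (s k == ba k)) && (((k.+1 < m.+1) && ob k.+1) ==> (s k == bb k.+1)) : nat))); last first.
  move=> s _; rewrite prod_bool; congr nat_of_bool; apply/forallP/forallP => H k.
    apply/andP; split; apply/implyP => /andP[h1 h2].
      by have := H k; rewrite h1 /= => /andP[/implyP/(_ h2)].
    have := H (inord k.+1); rewrite inordK // /= => /andP[_ /implyP/(_ h2)].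
    by rewrite inord_val.
  apply/implyP => k0; apply/andP; split; apply/implyP => h.
    by have := H k => /andP[/implyP + _]; rewrite k0 h; apply.
  have km : k.-1 < m.+1 by apply: leq_ltn_trans (leq_pred _) (ltn_ord k).
  have := H (inord k.-1) => /andP[_ /implyP]; rewrite inordK // prednK // ltn_ord h.
  by apply.
rewrite -(@bigA_distr_bigA nat 0 1 muln addn _ _ (fun (k : 'I_m.+1) (b : bool) => ((((0 < k) && oa k) ==> (b == ba k)) && (((k.+1 < m.+1) && ob k.+1) ==> (b == bb k.+1)) : nat))) /=.
by apply: eq_bigr => k _; rewrite /vv.
Qed.

Lemma useq_nth' m (u : 'S_m.+1) k : k < m.+1 ->
  nth 0 [seq (u i).+1 | i <- enum 'I_m.+1] k = (fu u k).+1.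
Proof.
move=> km; rewrite (nth_map ord0) ?size_enum_ord //.
by rewrite /fu; congr (nat_of_ord (u _)).+1; apply: val_inj; rewrite /= nth_enum_ord // inordK.
Qed.

Lemma Peak_mem m (u : 'S_m.+1) (i : 'I_m.+1) :
  (i \in Peak u) = (1 < i) && asc u i.-1 && ~~ asc u i.
Proof.
rewrite inE [i <= _](ltn_ord i) /=.
case: i => [[|[|k]] hk] //. rewrite /= in hk *.
have hk1 : k.+1 < m.+1 by apply: ltn_trans hk.
rewrite (useq_nth' _ (ltn_trans (ltnSn _) hk1)) (useq_nth' _ hk1) (useq_nth' _ hk) !ltnS.
rewrite /asc /=; congr (_ && _).
have := fu_neq u (ltn0Sn k.+1) hk => /=.
by case: ltngtP.
Qed.

Lemma shift1_mem m (J : {set 'I_m.+1}) (i : 'I_m.+1) :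
  (i \in shift1 J) = (0 < i) && (inord i.-1 \in J).
Proof.
rewrite inE; apply/existsP/andP => [[j /andP[jJ /eqP ->]] | [i0 iJ]].
  by split => //=; rewrite inord_val.
exists (inord i.-1); rewrite iJ /= inordK ?prednK //.
exact: ltnW (ltn_ord i). Qed.

Lemma Peak_inF m (u : 'S_m.+1) : inF (Peak u).
Proof.
apply/andP; split; apply/forallP => i; apply/implyP; rewrite Peak_mem.
  by case/andP => /andP[-> _] _; rewrite /= -ltnS (ltn_ord i).
case/andP => _ ni; apply/forallP => j; apply/implyP; rewrite Peak_mem.
case/andP => /andP[_ aj] _; apply/negP => /eqP ji.
by move: aj; rewrite ji /= (negbTE ni).
Qed.

Lemma collapse m (u : 'S_m.+1) (P : pred {set 'I_m.+1}) (c : {set 'I_m.+1} -> nat) :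
  (\sum_(F : {set 'I_m.+1} | inF F && P F) (c F)%:Z * Pring F u)%R
  = (if P (Peak u) then (c (Peak u))%:Z else 0)%R.
Proof.
case: ifP => HP.
  rewrite (bigD1 (Peak u)) /=; last by rewrite Peak_inF HP.
  rewrite big1 ?addr0; first by rewrite /Pring ffunE eqxx mulr1.
  by move=> F /andP[_ nF]; rewrite /Pring ffunE eq_sym (negbTE nF) mulr0.
rewrite big1 // => F /andP[_ PF]; rewrite /Pring ffunE.
by case: eqP => [e|]; [rewrite -e HP in PF | rewrite mulr0].
Qed.

Lemma or_and_sum N (L R : nat -> bool) :
  \sum_(0 <= k < N) (L k || R k : nat) + \sum_(0 <= k < N) (L k && R k : nat)
  = \sum_(0 <= k < N) (L k : nat) + \sum_(0 <= k < N) (R k : nat).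
Proof.
rewrite -!big_split /=; apply: eq_bigr => k _.
by case: (L k); case: (R k).
Qed.

Lemma arith P a c m : P * 2 ^ a = 2 ^ m.+1 -> a + c = m -> P = 2 ^ (1 + c).
Proof.
move=> H e; apply/eqP; rewrite -(eqn_pmul2r (expn_gt0 2 a)) H -expnD -e.
by rewrite add1n addSn addnC.
Qed.

Lemma card_asum m (A : {set 'I_m.+1}) :
  #|A| = \sum_(0 <= k < m.+1) (inord k \in A : nat).
Proof.
rewrite -sum1_card big_mkcond /= big_mkord; apply: eq_bigr => i _.
by rewrite inord_val; case: (i \in A).
Qed.

Lemma sum_pos m : \sum_(0 <= k < m.+1) (0 < k : nat) = m.
Proof.
rewrite big_nat_recl //= add0n.
by rewrite (eq_bigr (fun _ => 1)) // sum_nat_const_nat muln1 subn0.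
Qed.

Lemma X0_val m (J : {set 'I_m.+1}) (u : 'S_m.+1) (s : {ffun 'I_m.+1 -> bool}) :
  X0 J ((u, s) : sperm m.+1) = Posz ([forall j : 'I_m.+1, (0 < j) ==>
    (((((inord j \notin J) && asc u j) ==> (s j == false)) &&
     (((inord j \notin J) && ~~ asc u j) ==> (s (inord j.-1) == true))))] : nat).
Proof.
rewrite /X0 /Xset ffunE; congr (Posz (nat_of_bool _)).
apply/subsetP/forallP => [H j | H j].
  apply/implyP => j0; move: (H j); rewrite Des_mem inE eqn0Ngt j0 /= inord_val.
  by case: (j \in J); case: (asc u j); case: (s j); case: (s (inord j.-1)) => //= /(_ isT).
rewrite Des_mem inE eqn0Ngt; case: (posnP j) => [j0|j0]; rewrite ?j0 //=.
have := H j; rewrite j0 /= inord_val /=.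
by case: (j \in J); case: (asc u j); case: (s j); case: (s (inord j.-1)).
Qed.

Lemma forall_split m (p : 'I_m.+1 -> bool) :
  [forall i, p i] = p ord0 && [forall i : 'I_m.+1, (0 < i) ==> p i].
Proof.
apply/forallP/andP => [H|[H0 /forallP H] i].
  by split; [apply: H | apply/forallP => i; apply/implyP => _; apply: H].
case: (posnP i) => [i0|ip]; last exact: (implyP (H i) ip).
by have -> : i = ord0 by apply: val_inj.
Qed.

Lemma Y0_val m (J : {set 'I_m.+1}) (hJ : forall i : 'I_m.+1, i \in J -> 0 < val i)
  (u : 'S_m.+1) (s : {ffun 'I_m.+1 -> bool}) :
  Y0 J ((u, s) : sperm m.+1) = Posz ([forall j : 'I_m.+1, (0 < j) ==>
    ((asc u j ==> (s j == (inord j \in J))) &&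
     (~~ asc u j ==> (s (inord j.-1) == (inord j \notin J))))] : nat).
Proof.
rewrite /Y0 /Yset !ffunE -PoszD; congr Posz.
set D := Des _.
have key : forall A, (D == A) = [forall i, (i \in D) == (i \in A)].
  by move=> A; apply/eqP/forallP => [-> i | H]; [ | apply/setP => i; apply/eqP/H].
have Q : [forall j : 'I_m.+1, (0 < j) ==>
    ((asc u j ==> (s j == (inord j \in J))) &&
     (~~ asc u j ==> (s (inord j.-1) == (inord j \notin J))))]
   = [forall j : 'I_m.+1, (0 < j) ==> ((j \in D) == (j \in J))].
  apply: eq_forallb => j; case: (posnP j) => [//|j0] /=; rewrite /D Des_mem eqn0Ngt j0 /= inord_val.
  by case: (j \in J); case: (asc u j); case: (s j); case: (s (inord j.-1)).
have QZ : [forall j : 'I_m.+1, (0 < j) ==> ((j \in D) == (j \in J))]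
   = [forall j : 'I_m.+1, (0 < j) ==> ((j \in D) == (j \in setZ J))].
  apply: eq_forallb => j; case: (posnP j) => [//|j0].
  by have -> : (j \in setZ J) = (j \in J) by rewrite /setZ inE; case: eqP => // e; rewrite e in j0.
have oJ : (ord0 \in J) = false by apply/negP => /hJ.
have oZ : (ord0 \in setZ J) = true by rewrite /setZ inE eqxx.
rewrite Q !key (forall_split (fun i => (i \in D) == (i \in setZ J))) (forall_split (fun i => (i \in D) == (i \in J))) /= -QZ oJ oZ.
by case: (ord0 \in D); case: [forall j : 'I_m.+1, _].
Qed.

Local Open Scope ring_scope.

Lemma partX m (J : {set 'I_m.+1}) (hJ : forall i : 'I_m.+1, i \in J -> (0 < val i)%N) (u : 'S_m.+1) :
  phi (X0 J) u =
    \sum_(F : {set 'I_m.+1} | inF F && (F \subset J :|: shift1 J))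
       (2 ^ (1 + #|J|))%:Z * Pring F u.
Proof.
rewrite phi_sum.
under eq_bigr do rewrite X0_val.
rewrite -(big_morph Posz PoszD (erefl _)).
rewrite (@signs_count m (fun j => (inord j \notin J) && asc u j) (fun j => (inord j \notin J) && ~~ asc u j) (fun _ => false) (fun _ => true)).
rewrite (collapse u (fun F => F \subset J :|: shift1 J) (fun _ => (2 ^ (1 + #|J|))%N)).
set L := fun k => (0 < k)%N && ((inord k \notin J) && asc u k).
set R := fun k => (k.+1 < m.+1)%N && ((inord k.+1 \notin J) && ~~ asc u k.+1).
case: (boolP [exists k : 'I_m.+1, L k && R k]) => [/existsP [k /andP [Lk Rk]] | /existsPn noLR].
  rewrite (@prod_incons m.+1 L R (fun _ => false) (fun _ => true) k) //.
  rewrite ifF //; apply/negP => /subsetP /(_ (inord k.+1)).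
  move: Lk Rk; rewrite /L /R => /and3P[k0 kJ ak] /and3P[km kJ' ak'].
  rewrite Peak_mem inE shift1_mem !inordK //= ltnS k0 ak ak' => /(_ isT).
  by rewrite (negbTE kJ') (negbTE kJ).
have cons : forall k, (k < m.+1)%N -> L k && R k -> false = true.
  by move=> k km LR; have := noLR (Ordinal km); rewrite LR.
have := prod_gen cons.
set a := (\sum_(0 <= k < m.+1) ((0 < k) && (inord k \notin J) : nat))%N.
have e1 : (\sum_(0 <= k < m.+1) (L k || R k : nat))%N = a.
  have z : (\sum_(0 <= k < m.+1) (L k && R k : nat))%N = 0%N.
    rewrite (eq_big_nat _ _ (F2 := fun _ => 0%N)) ?big1 // => k /andP[_ km].
    by have := noLR (Ordinal km) => /negbTE /= ->.
  have := or_and_sum m.+1 L R; rewrite z addn0 => ->.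
  rewrite /R (shift_sum m.+1 (fun j => (inord j \notin J) && ~~ asc u j)) -big_split /=.
  apply: eq_bigr => k _; rewrite /L.
  by case: (0 < k)%N; case: (inord k \in J); case: (asc u k).
have e2 : (a + #|J|)%N = m.
  rewrite (card_asum J) -big_split /= -[RHS]sum_pos; apply: eq_big_nat => k /andP[_ km].
  case: (posnP k) => [k0|k0] /=.
    have -> : inord k = ord0 :> 'I_m.+1 by apply: val_inj; rewrite /= inordK // k0.
    by case: (boolP (ord0 \in J)) => // /hJ.
  by case: (inord k \in J).
rewrite e1 => H; rewrite (arith H e2) ifT //.
apply/subsetP => i; rewrite Peak_mem inE shift1_mem => /andP[/andP[i1 ai] nai].
apply/negPn/negP; rewrite negb_or => /andP[niJ nis].
have i0 : (0 < i)%N by apply: ltn_trans i1.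
have im : (i.-1 < m.+1)%N by apply: leq_ltn_trans (leq_pred _) (ltn_ord i).
have := noLR (Ordinal im); rewrite /L /R /= prednK // ltn_ord inord_val niJ ai nai.
by rewrite -ltnS prednK // i1 /=; move: nis; rewrite i0 /= => ->.
Qed.

Lemma partY m (J : {set 'I_m.+1}) (hJ : forall i : 'I_m.+1, i \in J -> (0 < val i)%N) (u : 'S_m.+1) :
  phi (Y0 J) u =
    \sum_(F : {set 'I_m.+1} | inF F && (F \subset symdiff J (shift1 J)))
       (2 ^ (1 + #|F|))%:Z * Pring F u.
Proof.
rewrite phi_sum.
under eq_bigr do rewrite (Y0_val hJ).
rewrite -(big_morph Posz PoszD (erefl _)).
rewrite (@signs_count m (asc u) (fun j => ~~ asc u j) (fun j => inord j \in J) (fun j => inord j \notin J)).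
rewrite (collapse u (fun F => F \subset symdiff J (shift1 J)) (fun F => (2 ^ (1 + #|F|))%N)).
set L := fun k => (0 < k)%N && asc u k.
set R := fun k => (k.+1 < m.+1)%N && ~~ asc u k.+1.
have symE : forall i : 'I_m.+1, (i \in symdiff J (shift1 J)) = ((i \in J) != (i \in shift1 J)).
  by move=> i; rewrite /symdiff in_setU !in_setD; case: (i \in J); case: (i \in shift1 J).
case: (boolP [exists k : 'I_m.+1, L k && R k && ((inord k \in J) != (inord k.+1 \notin J))]) => [/existsP [k /andP [/andP [Lk Rk] ne]] | /existsPn noLR].
  rewrite (@prod_incons m.+1 L R (fun k => inord k \in J) (fun k => inord k.+1 \notin J) k) //.
  rewrite ifF //; apply/negP => /subsetP /(_ (inord k.+1)).
  move: Lk Rk; rewrite /L /R => /andP[k0 ak] /andP[km ak'].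
  rewrite Peak_mem symE shift1_mem !inordK //= ltnS k0 ak ak' => /(_ isT).
  by move: ne; case: (inord k \in J); case: (inord k.+1 \in J).
have cons : forall k, (k < m.+1)%N -> L k && R k -> (inord k \in J) = (inord k.+1 \notin J).
  by move=> k km LR; have := noLR (Ordinal km); rewrite /= LR /= => /negbNE /eqP.
have := prod_gen cons.
have eP : (\sum_(0 <= k < m.+1) (L k && R k : nat))%N = #|Peak u|.
  rewrite (card_asum (Peak u)).
  rewrite (eq_big_nat _ _ (F2 := fun k => (k.+1 < m.+1)%N && ((0 < k.+1.-1)%N && asc u k.+1.-1 && ~~ asc u k.+1) : nat)); last first.
    by move=> k _; rewrite /L /R /=; case: (0 < k)%N; case: (asc u k); case: (k.+1 < m.+1)%N.
  rewrite (shift_sum m.+1 (fun j => (0 < j.-1)%N && asc u j.-1 && ~~ asc u j)).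
  apply: eq_big_nat => k /andP[_ km]; rewrite Peak_mem inordK //.
  by case: k {km}.
have e1 : (\sum_(0 <= k < m.+1) (L k || R k : nat) + #|Peak u|)%N = m.
  rewrite -eP or_and_sum /R (shift_sum m.+1 (fun j => ~~ asc u j)) -big_split /= -[RHS]sum_pos.
  by apply: eq_bigr => k _; rewrite /L; case: (0 < k)%N; case: (asc u k).
move=> H; rewrite (arith H e1) ifT //.
apply/subsetP => i; rewrite Peak_mem symE shift1_mem => /andP[/andP[i1 ai] nai].
have i0 : (0 < i)%N by apply: ltn_trans i1.
have im : (i.-1 < m.+1)%N by apply: leq_ltn_trans (leq_pred _) (ltn_ord i).
have := cons _ im; rewrite /L /R prednK // ltn_ord inord_val ai nai -ltnS prednK // i1 i0 /=.
by move/(_ isT) => ->; case: (i \in J).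
Qed.

Theorem proposition5p8 (n : nat) (hn : (0 < n)%N) (J : {set 'I_n})
  (hJ : forall i : 'I_n, i \in J -> (0 < val i)%N) :
  (forall u : 'S_n, phi (X0 J) u =
    \sum_(F : {set 'I_n} | inF F && (F \subset J :|: shift1 J))
       (2 ^ (1 + #|J|))%:Z * Pring F u)
  /\
  (forall u : 'S_n, phi (Y0 J) u =
    \sum_(F : {set 'I_n} | inF F && (F \subset symdiff J (shift1 J)))
       (2 ^ (1 + #|F|))%:Z * Pring F u).
Proof.
case: n hn J hJ => // m _ J hJ.
by split => u; [apply: partX | apply: partY].
Qed.
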